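(* Let $P$ be a finite poset and $X:P\to\mathcal{P}_{<\infty}$ a diagram of finite posets with transition maps $f_{pq}=X(p\to q)$. Suppose $p$ is a down beat point of $P$ dominated by $q$ (i.e. $q$ is the maximum of $\{r\in P: r<p\}$), and that $f_{qp}^{-1}(U_x)$ is a contractible finite space for every $x\in X_p$. Then $\operatorname{\underline{hocolim}} X$ collapses to $\operatorname{\underline{hocolim}} X|_{P\smallsetminus\{p\}}$. In particular they are weak equivalent.
   Context: $P$ is viewed as a category with a unique arrow $p\to q$ iff $p\le q$; $\mathcal{P}_{<\infty}$ is the category of finite posets and order-preserving maps. $\operatorname{\underline{hocolim}} X$ is the poset on $\coprod_{p}X_p$ keeping the order within each $X_p$ and, for $x\in X_p$, $y\in X_q$, $p\le q$, setting $x\le y$ iff $f_{pq}(x)\le y$ in $X_q$; $X|_{P\smallsetminus\{p\}}$ is the restricted diagram. For $x$ in a finite poset $Y$: $U_x=\{y\le x\}$, $\hat U_x=U_x\smallsetminus\{x\}$, $\hat F_x=\{y>x\}$. $x$ is an up beat point if $\hat F_x$ has a minimum, a down beat point if $\hat U_x$ has a maximum. A finite poset is contractible (dismantlable) if it can be reduced to one point by removing beat points one at a time. $x$ is a down (resp. up) weak point if $\hat U_x$ (resp. $\hat F_x$) is contractible; removing a weak point is an elementary collapse, and $Y$ collapses to $Z$ if $Z$ is obtained from $Y$ by a sequence of elementary collapses. Two finite posets are weak equivalent if their order complexes are homotopy equivalent. *)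

(* Defs.v *)
(* A finite poset is modelled as a subset A of a finType T,
   ordered by the restriction of a relation le : rel T. *)
From mathcomp Require Import all_boot.
Set Implicit Arguments. Unset Strict Implicit. Unset Printing Implicit Defensive.

Definition is_poset (T : finType) (le : rel T) : Prop :=
  [/\ reflexive le, antisymmetric le & transitive le].

Section FiniteSpaces.
Variables (T : finType) (le : rel T).

Definition ltr (x y : T) : bool := (x != y) && le x y.

Definition hatU (A : {set T}) (x : T) : {set T} := [set y in A | ltr y x].
Definition hatF (A : {set T}) (x : T) : {set T} := [set y in A | ltr x y].
Definition Ux (A : {set T}) (x : T) : {set T} := [set y in A | le y x].

Definition is_max (S : {set T}) (m : T) : Prop :=
  m \in S /\ forall y, y \in S -> le y m.
Definition is_min (S : {set T}) (m : T) : Prop :=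
  m \in S /\ forall y, y \in S -> le m y.

Definition up_beat_point (A : {set T}) (x : T) : Prop :=
  x \in A /\ exists m, is_min (hatF A x) m.
Definition down_beat_point (A : {set T}) (x : T) : Prop :=
  x \in A /\ exists m, is_max (hatU A x) m.
Definition beat_point (A : {set T}) (x : T) : Prop :=
  up_beat_point A x \/ down_beat_point A x.

(* contractible = dismantlable: reducible to one point by removing beat
   points one at a time *)
Inductive contractible : {set T} -> Prop :=
  | contractible_pt (x : T) : contractible [set x]
  | contractible_step (A : {set T}) (x : T) :
      beat_point A x -> contractible (A :\ x) -> contractible A.

Definition down_weak_point (A : {set T}) (x : T) : Prop :=
  x \in A /\ contractible (hatU A x).
Definition up_weak_point (A : {set T}) (x : T) : Prop :=
  x \in A /\ contractible (hatF A x).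
Definition weak_point (A : {set T}) (x : T) : Prop :=
  down_weak_point A x \/ up_weak_point A x.

Inductive collapses : {set T} -> {set T} -> Prop :=
  | collapses_refl (A : {set T}) : collapses A A
  | collapses_step (A B : {set T}) (x : T) :
      weak_point A x -> collapses (A :\ x) B -> collapses A B.

End FiniteSpaces.

(* A diagram X : P -> finite posets, with transition maps f p q = X(p -> q)
   (only meaningful when p <= q). *)
Definition is_diagram (P : finType) (leP : rel P) (X : P -> finType)
    (leX : forall p, rel (X p)) (f : forall p q, X p -> X q) : Prop :=
  [/\ is_poset leP,
      forall p, is_poset (leX p),
      forall p q, leP p q -> forall x y : X p,
          leX p x y -> leX q (f p q x) (f p q y),
      forall p (x : X p), f p p x = x &
      forall p q r (x : X p), leP p q -> leP q r ->
          f q r (f p q x) = f p r x].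

(* order of the (non-Hausdorff) homotopy colimit on the sigma type *)
Definition hocolim_le (P : finType) (leP : rel P) (X : P -> finType)
    (leX : forall p, rel (X p)) (f : forall p q, X p -> X q)
    (a b : {p : P & X p}) : bool :=
  leP (tag a) (tag b) && leX (tag b) (f (tag a) (tag b) (tagged a)) (tagged b).

(* underlying set of hocolim X|_{P \ {p}} *)
Definition hocolim_restr (P : finType) (X : P -> finType) (p : P)
  : {set {r : P & X r}} := [set a | tag a != p].

(* Main.v *)
Require Import Defs.
From mathcomp Require Import all_boot.
Set Implicit Arguments. Unset Strict Implicit. Unset Printing Implicit Defensive.

Section Gen.
Variables (T : finType) (le : rel T).
Hypotheses (lerefl : reflexive le) (leanti : antisymmetric le) (letrans : transitive le).

Lemma exists_max (S : {set T}) a0 : a0 \in S ->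
  exists2 a, a \in S & forall b, b \in S -> le a b -> b = a.
Proof.
move=> a0S.
suff H: forall n a, a \in S -> #|[set b in S | le a b]| <= n ->
  exists2 a, a \in S & forall b, b \in S -> le a b -> b = a.
  exact: (H _ a0 a0S (leqnn _)).
elim=> [|n IH] a aS.
  rewrite leqn0 cards_eq0 => /eqP/setP/(_ a).
  by rewrite !inE aS lerefl.
move=> hn.
case: (boolP [exists b in S, le a b && (b != a)]).
  move=> /existsP [b /andP[bS /andP[lab ba]]].
  apply: (IH b bS).
  rewrite -ltnS; apply: leq_trans hn; apply: proper_card.
  apply/properP; split.
    apply/subsetP=> c; rewrite !inE => /andP[cS bc].
    by rewrite cS (letrans lab bc).
  exists a; first by rewrite inE aS lerefl.
  rewrite inE aS /=; apply/negP => lba.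
  by move/negP: ba; apply; apply/eqP; apply: leanti; rewrite lba lab.
move=> H; exists a => // b bS lab.
apply/eqP; apply: contraNT H => ba; apply/existsP; exists b.
by rewrite bS lab ba.
Qed.

Lemma retract_contr (r : T -> T) (C : {set T}) :
  (forall c, c \in C -> r c = c) ->
  contractible le C ->
  forall B : {set T}, C \subset B ->
  (forall a, a \in B -> r a \in C) ->
  (forall a, a \in B -> le a (r a)) ->
  (forall a b, a \in B -> b \in B -> le a b -> le (r a) (r b)) ->
  contractible le B.
Proof.
move=> rC cC B.
move: {2}#|B :\: C| (leqnn #|B :\: C|) => n.
elim: n B => [|n IH] B hn CB rB leB mB.
  have -> : B = C; last done.
  apply/eqP; rewrite eqEsubset CB andbT.
  by rewrite -setD_eq0 -cards_eq0 -leqn0.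
case: (set_0Vmem (B :\: C)) => [E|[a0 a0BC]].
  have -> : B = C; last done.
  by apply/eqP; rewrite eqEsubset CB andbT -setD_eq0 E.
have [a aBC amax] := exists_max a0BC.
move: (aBC); rewrite inE => /andP[aC aB].
have raC := rB a aB.
have raB : r a \in B by apply: (subsetP CB).
apply: (@contractible_step _ _ _ a).
  left; split=> //; exists (r a); split.
    rewrite inE /ltr raB (leB a aB) andbT /=.
    by apply/eqP => ea; move: aC; rewrite ea raC.
  move=> b; rewrite inE /ltr => /andP[bB /andP[ab lab]].
  case: (boolP (b \in C)) => bC.
    by rewrite -(rC b bC); apply: mB.
  have := amax b; rewrite inE bC bB => /(_ isT lab) ba.
  by rewrite ba eqxx in ab.
apply: IH.
- have -> : (B :\ a) :\: C = (B :\: C) :\ a.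
    apply/setP=> y; rewrite !inE.
    by case: (y \in C); case: (y \in B); case: (y == a).
  by move: hn; rewrite (cardsD1 a (B :\: C)) aBC.
- apply/subsetP=> c cC'; rewrite !inE (subsetP CB _ cC') andbT.
  by apply/eqP => ca; move: aC; rewrite -ca cC'.
- by move=> x; rewrite inE => /andP[_ xB]; apply: rB.
- by move=> x; rewrite inE => /andP[_ xB]; apply: leB.
- by move=> x y; rewrite !inE => /andP[_ xB] /andP[_ yB]; apply: mB.
Qed.

End Gen.

Lemma contr_map (T1 T2 : finType) (le1 : rel T1) (le2 : rel T2) (g : T1 -> T2) :
  injective g -> (forall x y, le2 (g x) (g y) = le1 x y) ->
  forall A, contractible le1 A -> contractible le2 (g @: A).
Proof.
move=> gi gle A; elim=> [x | A0 x bp _ IH].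
  by rewrite imset_set1; apply: contractible_pt.
apply: (@contractible_step _ _ _ (g x)); last first.
  have -> : g @: A0 :\ g x = g @: (A0 :\ x); last done.
  apply/setP=> y; rewrite !inE; apply/andP/imsetP.
    move=> [yx /imsetP[z zA yz]]; subst y; exists z => //.
    by rewrite !inE zA andbT -(inj_eq gi).
  move=> [z]; rewrite !inE => /andP[zx zA] ->.
  by rewrite (inj_eq gi) zx imset_f.
case: bp => [[xA [m [mS mmax]]] | [xA [m [mS mmax]]]].
  left; split; first exact: imset_f.
  exists (g m); split.
    move: mS; rewrite !inE /ltr => /andP[mA /andP[xm lxm]].
    by rewrite imset_f // (inj_eq gi) xm gle.
  move=> y; rewrite inE /ltr => /andP[/imsetP[z zA ->]].
  rewrite (inj_eq gi) gle => xz; rewrite gle; apply: mmax.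
  by rewrite inE /ltr zA.
right; split; first exact: imset_f.
exists (g m); split.
  move: mS; rewrite !inE /ltr => /andP[mA /andP[xm lxm]].
  by rewrite imset_f // (inj_eq gi) xm gle.
move=> y; rewrite inE /ltr => /andP[/imsetP[z zA ->]].
rewrite (inj_eq gi) gle => xz; rewrite gle; apply: mmax.
by rewrite inE /ltr zA.
Qed.

Unset Implicit Arguments.
Section Main.
Variables (P : finType) (leP : rel P) (X : P -> finType)
    (leX : forall p, rel (X p)) (f : forall p q, X p -> X q).
Hypothesis D : is_diagram leP leX f.
Local Notation hle := (hocolim_le leP leX f).

Lemma hle_refl : forall a, hle a a.
Proof.
case: D => [[r _ _] hX _ fid _] [i x]; rewrite /hocolim_le /= r fid.
by case: (hX i) => rx _ _; apply: rx.
Qed.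

Lemma hle_trans : forall b a c, hle a b -> hle b c -> hle a c.
Proof.
case: D => [[_ _ tP] hX fm _ fc] [j y] [i x] [k z]; rewrite /hocolim_le /=.
move=> /andP[ij hxy] /andP[jk hyz].
rewrite (tP _ _ _ ij jk) /=.
case: (hX k) => _ _ tk.
apply: (tk (f j k y)); last exact: hyz.
rewrite -(fc _ _ _ x ij jk). exact: fm.
Qed.

Lemma hle_anti : forall a b, hle a b && hle b a -> a = b.
Proof.
case: D => [[_ aP _] hX _ fid _] [i x] [j y]; rewrite /hocolim_le /=.
case/andP=> /andP[ij hxy] /andP[ji hyx].
have e : i = j by apply: aP; rewrite ij ji.
subst j; rewrite !fid in hxy hyx.
case: (hX i) => _ aX _.
by rewrite (aX x y) // hxy hyx.
Qed.

End Main.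
Arguments hle_refl {P leP X leX f}.
Arguments hle_trans {P leP X leX f}.
Arguments hle_anti {P leP X leX f}.

Definition Aset (P : finType) (X : P -> finType) (p : P) (S : {set X p})
  : {set {r : P & X r}} :=
  hocolim_restr X p :|: [set Tagged X y | y in S].
Arguments Aset {P X p} S.

Lemma Tag_inj (P : finType) (X : P -> finType) (r : P) :
  injective (fun y : X r => Tagged X y).
Proof. move=> a b; exact: eq_from_Tagged. Qed.

Lemma memA_p (P : finType) (X : P -> finType) (p : P) (S : {set X p}) (y : X p) :
  (Tagged X y \in Aset S) = (y \in S).
Proof.
by rewrite /Aset /hocolim_restr in_setU inE /= eqxx /= (mem_imset _ _ (@Tag_inj _ X p)).
Qed.

Lemma memA_r (P : finType) (X : P -> finType) (p : P) (S : {set X p}) r (y : X r) :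
  r != p -> Tagged X y \in Aset S.
Proof. by move=> rp; rewrite /Aset /hocolim_restr in_setU inE /= rp. Qed.

Lemma tag_neq (P : finType) (X : P -> finType) r p (y : X r) (x : X p) :
  r != p -> (Tagged X y != Tagged X x) = true.
Proof. by move=> rp; apply/eqP => /(congr1 tag) /= e; move: rp; rewrite e eqxx. Qed.

Theorem proposition2p8 (P : finType) (leP : rel P) (X : P -> finType)
    (leX : forall p, rel (X p)) (f : forall p q, X p -> X q)
    (p q : P) :
  is_diagram leP leX f ->
  is_max leP (hatU leP setT p) q ->
  (forall x : X p, contractible (leX q) [set y : X q | leX p (f q p y) x]) ->
  collapses (hocolim_le leP leX f) setT (hocolim_restr X p).
Proof.
move=> D [qU qmax] hc.
move: (qU); rewrite inE /ltr => /andP[_ /andP[qp lqp]].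
have [[rP aP tP] hX fm fid fc] := D.
have hrefl := hle_refl D; have htrans := hle_trans D; have hanti := hle_anti D.
have toq : forall r, r != p -> leP r p -> leP r q.
  by move=> r rp lrp; apply: qmax; rewrite !inE /ltr rp lrp.
have base : collapses (hocolim_le leP leX f) (Aset (set0 : {set X p})) (hocolim_restr X p).
  by rewrite /Aset imset0 setU0; apply: collapses_refl.
suff H : forall n (S : {set X p}), #|S| <= n ->
    collapses (hocolim_le leP leX f) (Aset S) (hocolim_restr X p).
  have -> : [set: {r : P & X r}] = Aset [set: X p].
    apply/setP => -[r y]; rewrite inE; case: (eqVneq r p) => [e|rp].
      by subst r; rewrite memA_p inE.
    by rewrite memA_r.
  exact: (H _ _ (leqnn _)).
elim=> [|n IH] S hS.
  by move: hS; rewrite leqn0 cards_eq0 => /eqP ->.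
case: (set_0Vmem S) => [->//|[x0 x0S]].
case: (hX p) => rXp aXp tXp.
have [x xS xmin] := @exists_max (X p) (fun a b => leX p b a) (fun a => rXp a)
  (fun a b h => aXp a b (eq_trans (andbC _ _) h)) (fun b a c h1 h2 => tXp _ _ _ h2 h1) S x0 x0S.
apply: (@collapses_step _ _ _ _ (Tagged X x)).
  left; split; first by rewrite memA_p.
  have -> : hatU (hocolim_le leP leX f) (Aset S) (Tagged X x) =
      [set a | (tag a != p) && leP (tag a) p && leX p (f (tag a) p (tagged a)) x].
    apply/setP => -[r y]; rewrite [in LHS]inE.
    case: (eqVneq r p) => [e|rp].
      subst r; rewrite memA_p !inE /ltr /hocolim_le /= fid eqxx /= (inj_eq (@Tag_inj _ X p)).
      case: (boolP (y \in S)) => //= yS; case: (eqVneq y x) => //= yx.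
      apply/negP => /andP[_ yx'].
      by move: yx; rewrite (xmin y yS yx') eqxx.
    by rewrite memA_r // !inE /ltr /hocolim_le /= tag_neq // rp.
  set g := fun y : X q => Tagged X y.
  apply: (@retract_contr _ (hocolim_le leP leX f) hrefl hanti htrans
     (fun a => Tagged X (f (tag a) q (tagged a)))
     (g @: [set y : X q | leX p (f q p y) x])).
  - by move=> c /imsetP[y _ ->]; rewrite /g /= fid.
  - apply: contr_map; [exact: Tag_inj | move=> a b; rewrite /hocolim_le /= rP fid // | exact: hc].
  - apply/subsetP => c /imsetP[y]; rewrite inE => hy ->.
    by rewrite inE /= qp lqp hy.
  - move=> [r y]; rewrite inE /= => /andP[/andP[rp lrp] hy].
    by apply: imset_f; rewrite inE fc // toq.
  - move=> [r y]; rewrite inE /= => /andP[/andP[rp lrp] hy].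
    rewrite /hocolim_le /= toq //; by case: (hX q) => rq _ _; apply: rq.
  - move=> [r y] [s z]; rewrite !inE /= => /andP[/andP[rp lrp] _] /andP[/andP[sp lsp] _].
    rewrite /hocolim_le /= => /andP[rs hyz].
    rewrite rP fid /= -(fc r s q y rs (toq _ sp lsp)).
    exact: fm (toq _ sp lsp) _ _ hyz.
have -> : Aset S :\ Tagged X x = Aset (S :\ x).
  apply/setP => -[r y]; rewrite in_setD1; case: (eqVneq r p) => [e|rp].
    by subst r; rewrite !memA_p (inj_eq (@Tag_inj _ X p)) in_setD1.
  by rewrite !memA_r // tag_neq.
apply: IH; move: hS; by rewrite (cardsD1 x S) xS.
Qed.
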